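(* Let $G$ be a multiplicatively written Abelian group with identity $e$, let $\phi$ be a height on $G$, fix $\alpha\in G$, and let $t\in(0,\infty]$. The following three conditions are equivalent: (i) The infimum in the definition of $\phi_t(\alpha)$ is attained, i.e. there exists $(\alpha_1,\alpha_2,\ldots)\in G^\infty$ with $\tau_G(\alpha_1,\alpha_2,\ldots)=\alpha$ and $\phi_t(\alpha)=\|(\phi(\alpha_1),\phi(\alpha_2),\ldots)\|_t$. (ii) There exists a finite set $R\subseteq G$ (containing $e$) that replaces $G$ at $t$. (iii) There exists a set $S\subseteq G$ (containing $e$) with $\phi(S)$ finite that replaces $G$ at $t$.
   Context: A height on an Abelian group $G$ is a map $\phi:G\to[0,\infty)$ with $\phi(e)=0$ and $\phi(\beta)=\phi(\beta^{-1})$ for all $\beta\in G$. For a subset $S\subseteq G$ containing $e$, $S^\infty$ denotes the set of sequences $(\alpha_1,\alpha_2,\ldots)$ with all $\alpha_n\in S$ and $\alpha_n=e$ for all but finitely many $n$. The map $\tau_G:G^\infty\to G$ is $\tau_G(\alpha_1,\alpha_2,\ldots)=\prod_{n\ge1}\alpha_n$. $\mathbb R^\infty$ denotes the set of real sequences with only finitely many nonzero entries; for $\mathbf x=(x_1,x_2,\ldots)\in\mathbb R^\infty$, $\|\mathbf x\|_t=(\sum_n|x_n|^t)^{1/t}$ for $t\in(0,\infty)$ and $\|\mathbf x\|_\infty=\max_n|x_n|$. The $t$-metric version of $\phi$ is $\phi_t(\alpha)=\inf\{\|(\phi(\alpha_1),\phi(\alpha_2),\ldots)\|_t : (\alpha_1,\alpha_2,\ldots)\in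 G^\infty,\ \tau_G(\alpha_1,\alpha_2,\ldots)=\alpha\}$. A set $S\subseteq G$ containing $e$ replaces $G$ at $t$ (for the fixed $\alpha$) if $\phi_t(\alpha)=\inf\{\|(\phi(\alpha_1),\phi(\alpha_2),\ldots)\|_t:(\alpha_1,\alpha_2,\ldots)\in S^\infty,\ \tau_G(\alpha_1,\alpha_2,\ldots)=\alpha\}$. *)

(* Defs.v *)
From Stdlib Require Import Reals List ClassicalEpsilon.
Open Scope R_scope.

Inductive ext_exp : Type := Fin (t : R) | Infty.

Definition valid_exp (t : ext_exp) : Prop :=
  match t with Fin t => 0 < t | Infty => True end.

Definition rpow (x t : R) : R :=
  if Rle_dec x 0 then 0 else Rpower x t.

(* ||x||_t for a finitely supported real sequence, represented by the list of
   its first entries (all later entries being 0). *)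
Definition tnorm (t : ext_exp) (l : list R) : R :=
  match t with
  | Fin t => rpow (fold_right (fun x acc => rpow (Rabs x) t + acc) 0 l) (/ t)
  | Infty => fold_right (fun x acc => Rmax (Rabs x) acc) 0 l
  end.

Record abelian_group (G : Type) (mul : G -> G -> G) (inv : G -> G) (e : G) : Prop := {
  ag_assoc : forall a b c, mul a (mul b c) = mul (mul a b) c;
  ag_comm  : forall a b, mul a b = mul b a;
  ag_idl   : forall a, mul e a = a;
  ag_invl  : forall a, mul (inv a) a = e
}.

Definition is_height {G : Type} (inv : G -> G) (e : G) (phi : G -> R) : Prop :=
  (forall b, 0 <= phi b) /\ phi e = 0 /\ (forall b, phi b = phi (inv b)).

(* tau_G on finitely supported sequences (represented as finite lists). *)
Definition tau {G : Type} (mul : G -> G -> G) (e : G) (l : list G) : G :=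
  fold_right mul e l.

Definition is_inf (E : R -> Prop) (m : R) : Prop :=
  (forall x, E x -> m <= x) /\ (forall b, (forall x, E x -> b <= x) -> b <= m).

Definition value_set {G : Type} (mul : G -> G -> G) (e : G) (phi : G -> R)
  (t : ext_exp) (S : G -> Prop) (alpha : G) : R -> Prop :=
  fun v => exists l : list G, Forall S l /\ tau mul e l = alpha /\
                             v = tnorm t (map phi l).

Definition Rinf (E : R -> Prop) : R := epsilon (inhabits 0) (fun m => is_inf E m).

Definition phi_t {G : Type} (mul : G -> G -> G) (e : G) (phi : G -> R)
  (t : ext_exp) (alpha : G) : R :=
  Rinf (value_set mul e phi t (fun _ => True) alpha).

Definition replaces {G : Type} (mul : G -> G -> G) (e : G) (phi : G -> R)
  (t : ext_exp) (alpha : G) (S : G -> Prop) : Prop :=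
  S e /\ is_inf (value_set mul e phi t S alpha) (phi_t mul e phi t alpha).

(* Main.v *)
Require Import Defs.
From Stdlib Require Import Reals List.
From Stdlib Require Import Lra Classical ClassicalEpsilon.
Open Scope R_scope.

Lemma rpow_nonneg : forall x u, 0 <= rpow x u.
Proof. intros; unfold rpow; destruct Rle_dec; [lra|left; unfold Rpower; apply exp_pos]. Qed.

Lemma rpow_lt : forall a b u, 0 <= a -> a < b -> 0 < u -> rpow a u < rpow b u.
Proof.
  intros a b u Ha Hab Hu. unfold rpow.
  destruct (Rle_dec b 0); [lra|]. destruct (Rle_dec a 0).
  - unfold Rpower; apply exp_pos.
  - unfold Rpower. apply exp_increasing. apply Rmult_lt_compat_l; auto.
    apply ln_increasing; lra.
Qed.

Definition raw (t : R) (r : list R) : R := fold_right (fun x acc => rpow (Rabs x) t + acc) 0 r.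

Lemma raw_nonneg : forall t r, 0 <= raw t r.
Proof. intros t r; induction r; simpl; [lra|]. pose proof (rpow_nonneg (Rabs a) t). lra. Qed.

Lemma tnorm_fin : forall t r, tnorm (Fin t) r = rpow (raw t r) (/ t).
Proof. reflexivity. Qed.

Lemma tnorm_nonneg : forall t r, 0 <= tnorm t r.
Proof.
  intros [t|] r; [apply rpow_nonneg|]. simpl. induction r; simpl; [lra|].
  eapply Rle_trans; [exact IHr| apply Rmax_r].
Qed.

Fixpoint all_sums (P : list R) (n : nat) : list R :=
  match n with
  | O => 0 :: nil
  | S n' => 0 :: flat_map (fun s => map (fun c => c + s) P) (all_sums P n')
  end.

Lemma zero_in_all_sums : forall P n, In 0 (all_sums P n).
Proof. intros P [|n]; simpl; auto. Qed.

Lemma delta_exists : forall L' : list R, exists d, 0 < d /\ forall c, In c L' -> 0 < c -> d <= c.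
Proof.
  induction L' as [|a L' IH].
  - exists 1; split; [lra| intros c []].
  - destruct IH as [d [Hd Hc]]. destruct (Rlt_le_dec 0 a).
    + exists (Rmin d a). split. apply Rmin_case; lra.
      intros c [<-|Hin] Hc0. apply Rmin_r. eapply Rle_trans; [apply Rmin_l| auto].
    + exists d. split; auto. intros c [<-|Hin] Hc0; [lra| auto].
Qed.

Lemma sums_in : forall t L d, 0 < d ->
  (forall y, In y L -> 0 < rpow (Rabs y) t -> d <= rpow (Rabs y) t) ->
  forall r, Forall (fun x => In x L) r -> forall n, raw t r < INR n * d ->
  In (raw t r) (all_sums (map (fun y => rpow (Rabs y) t) L) n).
Proof.
  intros t L d Hd Hdc r. induction r as [|x r IH]; intros Hr n Hlt.
  - apply zero_in_all_sums.
  - inversion Hr; subst. simpl in Hlt |- *. fold (raw t r) in Hlt |- *.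
    pose proof (rpow_nonneg (Rabs x) t) as Hx0. pose proof (raw_nonneg t r).
    destruct (Rle_lt_dec (rpow (Rabs x) t) 0) as [Hz|Hp].
    + replace (rpow (Rabs x) t + raw t r) with (raw t r) by lra. apply IH; auto; lra.
    + pose proof (Hdc x H1 Hp). destruct n as [|n].
      * simpl in Hlt. lra.
      * rewrite S_INR in Hlt. simpl. right. apply in_flat_map.
        exists (raw t r). split. apply IH; auto. lra.
        apply (in_map (fun c => c + raw t r)). apply (in_map (fun y => rpow (Rabs y) t)); auto.
Qed.

Lemma infty_in : forall L r, Forall (fun x => In x L) r ->
  In (fold_right (fun x acc => Rmax (Rabs x) acc) 0 r) (0 :: map Rabs L).
Proof.
  intros L r; induction r as [|x r IH]; simpl; intros H; [left; auto|].
  inversion H; subst. unfold Rmax; destruct Rle_dec.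
  - apply IH; auto.
  - right; apply in_map; auto.
Qed.

Lemma finite_below : forall t, valid_exp t -> forall L r0, Forall (fun x => In x L) r0 ->
  exists B F, tnorm t r0 <= B /\
    forall r, Forall (fun x => In x L) r -> tnorm t r <= B -> In (tnorm t r) F.
Proof.
  intros [t|] Ht L r0 Hr0.
  - simpl in Ht.
    destruct (delta_exists (map (fun y => rpow (Rabs y) t) L)) as [d [Hd Hdc]].
    destruct (INR_unbounded (raw t r0 / d)) as [n Hn].
    exists (tnorm (Fin t) r0), (map (fun s => rpow s (/t)) (all_sums (map (fun y => rpow (Rabs y) t) L) n)).
    split; [lra|]. intros r Hr Hle. rewrite !tnorm_fin in Hle |- *. apply (in_map (fun s => rpow s (/t))).
    apply sums_in with d; auto.
    + intros y Hy Hp. apply Hdc; auto. apply (in_map (fun y => rpow (Rabs y) t)); auto.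
    + destruct (Rlt_le_dec (raw t r) (INR n * d)) as [|Hge]; auto. exfalso.
      assert (raw t r0 < INR n * d).
      { apply Rmult_lt_reg_r with (/ d). apply Rinv_0_lt_compat; auto.
        rewrite Rmult_assoc, Rinv_r; lra. }
      assert (rpow (raw t r0) (/t) < rpow (raw t r) (/t)).
      { apply rpow_lt. apply raw_nonneg. lra. apply Rinv_0_lt_compat; auto. }
      rewrite tnorm_fin in Hle. lra.
  - exists (tnorm Infty r0), (0 :: map Rabs L). split; [lra|].
    intros r Hr _. simpl. apply infty_in; auto.
Qed.

Lemma min_finite : forall (F : list R) (V : R -> Prop) (B : R),
  (forall v, V v -> v <= B -> In v F) -> (exists v, V v /\ v <= B) ->
  exists v0, V v0 /\ v0 <= B /\ forall v, V v -> v <= B -> v0 <= v.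
Proof.
  induction F as [|a F IHF]; intros V B HF [v [Hv HvB]].
  - destruct (HF v Hv HvB).
  - destruct (classic (V a /\ a <= B)) as [[Ha HaB]|Hna].
    + destruct (classic (exists v, (V v /\ v < a) /\ v <= B)) as [Hex|Hnex].
      * destruct (IHF (fun v => V v /\ v < a) B) as [v0 [[Hv0 Hv0a] [Hv0B Hmin]]].
        { intros w [Hw Hwa] HwB. destruct (HF w Hw HwB) as [<-|]; [lra|auto]. }
        { exact Hex. }
        exists v0. split; auto. split; auto. intros w Hw HwB.
        destruct (Rlt_le_dec w a). apply Hmin; auto. lra.
      * exists a. repeat split; auto. intros w Hw HwB.
        destruct (Rlt_le_dec w a); [|lra]. exfalso; apply Hnex; eauto.
    + apply IHF; [|eauto]. intros w Hw HwB.
      destruct (HF w Hw HwB) as [<-|]; [exfalso; tauto| auto].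
Qed.

Lemma attained : forall V m, is_inf V m ->
  (exists B F, (exists v, V v /\ v <= B) /\ forall v, V v -> v <= B -> In v F) -> V m.
Proof.
  intros V m [Hlb Hgl] [B [F [Hex HF]]].
  destruct (min_finite F V B HF Hex) as [v0 [Hv0 [Hv0B Hmin]]].
  assert (m <= v0) by (apply Hlb; auto).
  assert (v0 <= m).
  { apply Hgl. intros x Hx. destruct (Rle_lt_dec x B); [apply Hmin; auto| lra]. }
  replace m with v0 by lra. auto.
Qed.

Lemma is_inf_nonempty : forall V m, is_inf V m -> exists v, V v.
Proof.
  intros V m [_ Hgl]. apply NNPP; intros Hn.
  assert (m + 1 <= m). { apply Hgl. intros x Hx; exfalso; eauto. } lra.
Qed.

Lemma inf_exists : forall V : R -> Prop, (exists v, V v) -> (forall v, V v -> 0 <= v) ->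
  exists m, is_inf V m.
Proof.
  intros V [v Hv] Hnn.
  destruct (completeness (fun x => V (- x))) as [M [Hub Hlub]].
  { exists 0. intros x Hx. specialize (Hnn _ Hx). lra. }
  { exists (- v). rewrite Ropp_involutive; auto. }
  exists (- M). split.
  - intros x Hx. assert (- x <= M). { apply Hub. rewrite Ropp_involutive; auto. } lra.
  - intros b Hb. assert (M <= - b).
    { apply Hlub. intros y Hy. specialize (Hb _ Hy). lra. } lra.
Qed.

Lemma Rinf_spec : forall V, (exists m, is_inf V m) -> is_inf V (Rinf V).
Proof. intros V H. unfold Rinf. apply epsilon_spec. auto. Qed.

Theorem theorem2p1 (G : Type) (mul : G -> G -> G) (inv : G -> G) (e : G)
  (HG : abelian_group G mul inv e) (phi : G -> R) (Hphi : is_height inv e phi)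
  (alpha : G) (t : ext_exp) (Ht : valid_exp t) :
  ( (exists l : list G, tau mul e l = alpha /\
        phi_t mul e phi t alpha = tnorm t (map phi l))
    <-> (exists R0 : list G, In e R0 /\
           replaces mul e phi t alpha (fun x => In x R0)) )
  /\
  ( (exists R0 : list G, In e R0 /\
        replaces mul e phi t alpha (fun x => In x R0))
    <-> (exists S : G -> Prop, S e /\
           (exists L : list R, forall x, S x -> In (phi x) L) /\
           replaces mul e phi t alpha S) ).
Proof.
  assert (Hinf: is_inf (value_set mul e phi t (fun _ => True) alpha) (phi_t mul e phi t alpha)).
  { unfold phi_t. apply Rinf_spec. apply inf_exists.
    - exists (tnorm t (map phi (alpha :: nil))). exists (alpha :: nil).
      split; [constructor; auto|]. split; [|reflexivity].
      unfold tau; simpl. rewrite (ag_comm _ _ _ _ HG). apply (ag_idl _ _ _ _ HG).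
    - intros v [l [_ [_ ->]]]. apply tnorm_nonneg. }
  assert (H3to1: forall S, (exists L, forall x, S x -> In (phi x) L) ->
            replaces mul e phi t alpha S ->
            exists l, tau mul e l = alpha /\ phi_t mul e phi t alpha = tnorm t (map phi l)).
  { intros S [L HL] [HSe Hi].
    assert (Hv: value_set mul e phi t S alpha (phi_t mul e phi t alpha)).
    { apply attained; auto.
      destruct (is_inf_nonempty _ _ Hi) as [v [l0 [Hl0 [Htau0 ->]]]].
      destruct (finite_below t Ht L (map phi l0)) as [B [F [HB HF]]].
      { apply Forall_map. eapply Forall_impl; [|exact Hl0]. simpl; auto. }
      exists B, F. split.
      - exists (tnorm t (map phi l0)); split; auto. exists l0; auto.
      - intros v [l [Hl [Htau ->]]] Hle. apply HF; auto.
        apply Forall_map. eapply Forall_impl; [|exact Hl]. simpl; auto. }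
    destruct Hv as [l [_ [Htau Heq]]]. exists l. auto. }
  assert (H1to2: (exists l : list G, tau mul e l = alpha /\
        phi_t mul e phi t alpha = tnorm t (map phi l)) ->
        exists R0 : list G, In e R0 /\ replaces mul e phi t alpha (fun x => In x R0)).
  { intros [l [Htau Heq]]. exists (e :: l). split; [left; auto|]. split; [left; auto|]. split.
    - intros v [l' [_ [Htau' ->]]]. apply Hinf. exists l'.
      split; [apply Forall_forall; auto| auto].
    - intros b Hb. rewrite Heq. apply Hb. exists l.
      split; [apply Forall_forall; intros; right; auto| auto]. }
  assert (H2to3: (exists R0 : list G, In e R0 /\
        replaces mul e phi t alpha (fun x => In x R0)) ->
      (exists S : G -> Prop, S e /\
           (exists L : list R, forall x, S x -> In (phi x) L) /\
           replaces mul e phi t alpha S)).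
  { intros [R0 [He Hr]]. exists (fun x => In x R0). split; auto. split; auto.
    exists (map phi R0). intros; apply in_map; auto. }
  split; split; intros H.
  - apply H1to2; auto.
  - destruct (H2to3 H) as [S [_ [HL Hr]]]. eapply H3to1; eauto.
  - apply H2to3; auto.
  - apply H1to2. destruct H as [S [_ [HL Hr]]]. eapply H3to1; eauto.
Qed.
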